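(* Let $\xi_1,\xi_2,\dots$ be i.i.d. standard Gaussian random variables. There are constants $c_3,c_4>0$ such that for all integers $N\ge1$ and all $L\ge2N$, $$c_3N\log(L/N)\le-\log\mathbb{E}\,e^{-L\max_{i=1,\dots,N}|\xi_i|}\le c_4N\log(L/N).$$ *)

(* Defs.v *)
From HB Require Import structures.
From mathcomp Require Import all_boot all_order all_algebra.
From mathcomp Require Import all_classical all_reals all_analysis.
Set Implicit Arguments. Unset Strict Implicit. Unset Printing Implicit Defensive.
Import Order.TTheory GRing.Theory Num.Theory.
Local Open Scope classical_set_scope.
Local Open Scope ring_scope.

Definition mutually_independent d (T : measurableType d) (R : realType)
  (P : probability T R) (X : nat -> T -> R) : Prop :=
  forall (J : seq nat) (B : nat -> set R), uniq J ->
    (forall i, measurable (B i)) ->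
    P (\bigcap_(i in [set j | j \in J]) (X i @^-1` B i)) =
    (\prod_(i <- J) P (X i @^-1` B i))%E.

Definition std_gaussian d (T : measurableType d) (R : realType)
  (P : probability T R) (X : {RV P >-> R}) : Prop :=
  forall A : set R, measurable A -> distribution P X A = normal_prob 0 1 A.

(* Main.v *)
From HB Require Import structures.
From mathcomp Require Import all_boot all_order all_algebra.
From mathcomp Require Import all_classical all_reals all_analysis.
Require Import Defs.
From mathcomp Require Import ring lra measurable_realfun normal_distribution random_variable.
Import Order.TTheory GRing.Theory Num.Theory.
Set Implicit Arguments. Unset Strict Implicit. Unset Printing Implicit Defensive.
Local Open Scope classical_set_scope.
Local Open Scope ring_scope.

Section gauss.
Context (R : realType).
Local Notation mu := (@lebesgue_measure R).

Definition sym (t : R) : set R := `[-t, t]%classic.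


Lemma peak_le : normal_peak (1:R) <= 2^-1.
Proof.
rewrite /normal_peak lef_pV2 ?posrE ?sqrtr_gt0//; last first.
  by rewrite expr1n mul1r mulrn_wgt0// pi_gt0.
have -> : (2:R) = Num.sqrt (2 ^+ 2) by rewrite sqrtr_sqr ger0_norm.
rewrite ler_sqrt; last by rewrite expr1n mul1r mulrn_wge0// pi_ge0.
rewrite ?expr1n ?mul1r mulr2n expr2; have := @pi_ge2 R; lra.
Qed.

Lemma leb_itv (t : R) : 0 <= t -> mu (sym t) = (t *+ 2)%:E.
Proof.
move=> t0; rewrite /sym lebesgue_measure_itv/=.
case: ifPn; rewrite lte_fin => h.
  by rewrite -EFinD opprK mulr2n.
have -> : t = 0 by move: h; rewrite -leNgt; lra.
by rewrite mul0rn.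
Qed.

Lemma np_ub (t : R) : 0 <= t -> (normal_prob 0 1 (sym t) <= t%:E)%E.
Proof.
move=> t0; rewrite /normal_prob.
apply: (@le_trans _ _ (\int[mu]_(x in sym t) (normal_peak (1:R))%:E))%E.
  apply: ge0_le_integral => //.
  - exact: measurable_itv.
  - by move=> x _; rewrite lee_fin normal_pdf_ge0.
  - apply/measurable_EFinP; apply: measurable_funTS; exact: measurable_normal_pdf.
  - by move=> x _; rewrite lee_fin normal_pdf_ub// oner_neq0.
rewrite integral_cst/=; last exact: measurable_itv.
rewrite leb_itv// -EFinM lee_fin.
have := peak_le; have := normal_peak_ge0 (1:R); nra.
Qed.

Definition kap : R := 2 * normal_peak 1 * expR (- 8^-1).

Lemma kap_gt0 : 0 < kap.
Proof. by rewrite /kap !mulr_gt0// ?expR_gt0// normal_peak_gt0// oner_neq0. Qed.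

Lemma np_lb (t : R) : 0 <= t <= 2^-1 -> ((kap * t)%:E <= normal_prob 0 1 (sym t))%E.
Proof.
move=> /andP[t0 t2]; rewrite /normal_prob.
apply: (@le_trans _ _ (\int[mu]_(x in sym t) (normal_peak (1:R) * expR (- 8^-1))%:E))%E; last first.
  apply: ge0_le_integral => //.
  - exact: measurable_itv.
  - by move=> x _; apply: mulr_ge0; [apply: normal_peak_ge0|apply: expR_ge0].
  - apply/measurable_EFinP; apply: measurable_funTS; exact: measurable_normal_pdf.
  move=> x; rewrite /sym /= in_itv/= => /andP[xa xb].
  rewrite lee_fin /normal_pdf (negbTE (oner_neq0 R)) ler_wpM2l ?normal_peak_ge0//.
  rewrite /normal_fun ler_expR subr0 expr1n.
  have : x ^+ 2 <= 4^-1 by rewrite expr2; nra.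
  move: (x ^+ 2) => y; lra.
rewrite integral_cst/=; last exact: measurable_itv.
rewrite leb_itv// -EFinM lee_fin /kap; lra.
Qed.
End gauss.
Arguments kap {R}.

Section prob.
Context (R : realType) d (T : measurableType d) (P : probability T R)
  (xi : nat -> {RV P >-> R}).
Hypothesis hind : mutually_independent P (fun i => (xi i : T -> R)).
Hypothesis hg : forall i, std_gaussian (xi i).
Variable N : nat.

Definition M (w : T) : R := \big[Num.max/0]_(i < N) `|xi i w|.

Lemma M_ge0 w : 0 <= M w.
Proof.
rewrite /M; elim/big_ind: _ => //.
  by move=> x y x0 y0; rewrite le_max x0.
Qed.

Lemma M_le w t : (M w <= t) <-> (0 <= t /\ forall i : 'I_N, `|xi i w| <= t).
Proof.
split.
  by move/bigmax_leP => [h1 h2]; split => // i; exact: h2.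
by case=> h1 h2; apply/bigmax_leP; split => // i _; exact: h2.
Qed.

Lemma mM_gen (s : seq 'I_N) : measurable_fun setT (fun w => \big[Num.max/0]_(i <- s) `|xi i w|).
Proof.
elim: s => [|j s IH].
  by under eq_fun do rewrite big_nil; exact: measurable_cst.
have -> : (fun w => \big[Num.max/0]_(i <- j :: s) `|xi i w|) =
   (fun w => `|xi j w|) \max (fun w => \big[Num.max/0]_(i <- s) `|xi i w|).
  by apply/funext => w; rewrite big_cons.
apply: measurable_maxr => //.
exact: measurableT_comp (@normr_measurable R setT) (measurable_funPT (xi j)).
Qed.

Lemma mM : measurable_fun setT M.
Proof. exact: mM_gen. Qed.

Definition A (t : R) : set T := [set w | M w <= t].

Lemma mA t : measurable (A t).
Proof.
have := mM measurableT (measurable_itv (`]-oo, t]%R)).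
rewrite setTI; congr measurable; apply/seteqP; split => w /=;
  by rewrite /A /= in_itv.
Qed.

Definition q (t : R) : R := fine (normal_prob 0 1 (sym t)).

Lemma qE t : 0 <= t -> normal_prob 0 1 (sym t) = (q t)%:E.
Proof.
move=> t0; rewrite /q; have := np_ub t0.
have : (0 <= normal_prob 0 1 (sym t))%E by apply: measure_ge0.
by case: (normal_prob 0 1 (sym t)).
Qed.

Lemma q_ge0 t : 0 <= t -> 0 <= q t.
Proof.
move=> t0; have : (0 <= normal_prob 0 1 (sym t))%E by apply: measure_ge0.
by rewrite qE.
Qed.

Lemma q_ub t : 0 <= t -> q t <= t.
Proof. by move=> t0; have := np_ub t0; rewrite qE// lee_fin. Qed.

Lemma q_lb t : 0 <= t <= 2^-1 -> kap * t <= q t.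
Proof. by move=> h; have := np_lb h; case/andP: h => t0 _; rewrite qE// lee_fin. Qed.

Lemma PA t : 0 <= t -> P (A t) = (q t ^+ N)%:E.
Proof.
move=> t0.
have -> : A t = \bigcap_(i in [set j | j \in iota 0 N]) (xi i @^-1` sym t).
  apply/seteqP; split => w /=.
    move=> /M_le[_ h] i /=; rewrite mem_iota add0n => /andP[_ iN].
    have := h (Ordinal iN); rewrite /sym /= in_itv/= ler_norml //.
  move=> h; apply/M_le; split => // i.
  have := h i; rewrite /= mem_iota add0n ltn_ord => /(_ isT).
  by rewrite /sym /= in_itv/= ler_norml.
rewrite hind ?iota_uniq//; last by move=> _; exact: measurable_itv.
have -> : (\prod_(i <- iota 0 N) P (xi i @^-1` sym t) =
          \prod_(i <- iota 0 N) (q t)%:E)%E.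
  apply: eq_bigr => i _.
  have := hg i (measurable_itv `[-t, t]).
  by rewrite -qE// => <-.
rewrite prodEFin; congr (_%:E).
have -> : iota 0 N = index_iota 0 N by rewrite /index_iota subn0.
by rewrite prodr_const_nat subn0.
Qed.

Definition Y (L : R) (w : T) : R := expR (- (L * M w)).

Lemma mY L : measurable_fun setT (Y L).
Proof.
apply: (measurableT_comp (@measurable_expR R)).
apply: measurable_funN; apply: measurable_funM => //; exact: mM.
Qed.

Lemma EY_lb L t : 0 <= L -> 0 <= t ->
  ((expR (- (L * t)) * q t ^+ N)%:E <= 'E_P[Y L])%E.
Proof.
move=> L0 t0; rewrite unlock.
apply: (@le_trans _ _ (\int[P]_(w in A t) (expR (- (L * t)))%:E))%E.
  rewrite integral_cst; last exact: mA.
  rewrite le_eqVlt; apply/orP; left; apply/eqP; rewrite EFinM; congr (_ * _)%E; exact/esym/(PA t0).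
apply: (@le_trans _ _ (\int[P]_(w in A t) (Y L w)%:E))%E.
  apply: ge0_le_integral.
  - exact: mA.
  - by move=> w _; rewrite lee_fin expR_ge0.
  - exact: measurable_cst.
  - by apply/measurable_EFinP; apply: measurable_funTS; exact: mY.
  - move=> w; rewrite /A /= => Mw.
    by rewrite lee_fin /Y ler_expR lerN2 ler_wpM2l.
apply: ge0_subset_integral => //.
- exact: mA.
- by apply/measurable_EFinP; exact: mY.
- by move=> w _; rewrite lee_fin expR_ge0.
Qed.

Lemma EY_ub L s : 0 <= L -> 0 <= s ->
  ('E_P[Y L] <= (q s ^+ N + expR (- (L * s)))%:E)%E.
Proof.
move=> L0 s0; rewrite unlock.
apply: (@le_trans _ _ (\int[P]_w ((\1_(A s) w + expR (- (L * s)))%:E)))%E.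
  apply: ge0_le_integral => //.
  - by move=> w _; rewrite lee_fin expR_ge0.
  - by apply/measurable_EFinP; exact: mY.
  - apply/measurable_EFinP; apply: measurable_funD => //.
    exact: measurable_indic (mA s).
  - move=> w _; rewrite lee_fin indicE /Y.
    have [Aw|nAw] := boolP (w \in A s).
      rewrite mulr1n; apply: ler_wpDr; first exact: expR_ge0.
      by rewrite expR_le1 oppr_le0 mulr_ge0 ?M_ge0.
    rewrite mulr0n add0r ler_expR lerN2 ler_wpM2l//.
    move: nAw; rewrite notin_setE /A /= => /negP; rewrite -ltNge.
    exact: ltW.
under eq_integral do rewrite EFinD.
rewrite ge0_integralD //.
- have hE1 : (\int[P]_w (\1_(A s) w)%:E = (q s ^+ N)%:E)%E.
    rewrite integral_indic.
    + rewrite -(PA s0); congr (P _); exact: setIT.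
    + exact: measurableT.
    + exact: mA.
  rewrite hE1 integral_cst //= probability_setT mule1.
  by rewrite EFinD.
- by apply/measurable_EFinP; exact: measurable_indic (mA s).
Qed.

End prob.

Unset Implicit Arguments.

Lemma ln2_ub (R : realType) : ln (2:R) <= 5 / 6.
Proof.
have -> : (2:R) = (1 + 3^-1) * (1 + 2^-1) by field.
rewrite lnM ?posrE; [|lra|lra].
have h1 := @le_ln1Dx R (3^-1) ltac:(lra).
have h2 := @le_ln1Dx R (2^-1) ltac:(lra).
lra.
Qed.

Lemma ln2_lb (R : realType) : 2^-1 <= ln (2:R).
Proof.
have h := @le_ln1Dx R (- 2^-1) ltac:(lra).
move: h; have -> : (1 - 2^-1 : R) = 2^-1 by field.
rewrite lnV ?posrE; [lra|lra].
Qed.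

Theorem lemma8 (R : realType) :
  exists c3 c4 : R, 0 < c3 /\ 0 < c4 /\
  forall (d : measure_display) (T : measurableType d) (P : probability T R)
         (xi : nat -> {RV P >-> R}),
    mutually_independent P (fun i => (xi i : T -> R)) ->
    (forall i, std_gaussian (xi i)) ->
    forall (N : nat) (L : R), (1 <= N)%N -> 2 * N%:R <= L ->
      let E := fine ('E_P[fun w => expR (- (L * \big[Num.max/0]_(i < N) `|xi i w|))%R])%E in
      c3 * N%:R * ln (L / N%:R) <= - ln E /\
      - ln E <= c4 * N%:R * ln (L / N%:R).
Proof.
exists (20^-1), (3 + 2 * `|ln (@kap R)|).
split; first by rewrite invr_gt0.
split; first by have := normr_ge0 (ln (@kap R)); lra.
move=> d T P xi hind hg N L N1 LN E.
have n1 : 1 <= N%:R :> R by rewrite ler1n.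
have hEe : E = fine 'E_P[Y xi N L] by [].
rewrite hEe; clear hEe E.
set n := (N%:R : R) in n1 LN *.
have n0 : 0 < n by lra.
have L0 : 0 <= L by lra.
pose x := L / n.
have x2 : 2 <= x by rewrite /x ler_pdivlMr //; lra.
have x0 : 0 < x by lra.
pose a := ln x.
have l2 := ln2_lb R; have l2u := ln2_ub R.
have a2 : ln 2 <= a by rewrite /a ler_ln ?posrE //; lra.
have Lnx : L = n * x by rewrite /x mulrC divfK //; lra.
have xa : x = expR a by rewrite /a lnK ?posrE.
rewrite -/x -/a.
pose s := expR (- ((1 + a) / 2)).
have s0 : 0 <= s := expR_ge0 _.
pose t := x^-1.
have t0 : 0 <= t by rewrite /t invr_ge0; lra.
have t2 : t <= 2^-1 by rewrite /t lef_pV2 ?posrE //; lra.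
have hub := EY_ub hind hg N L0 s0.
have hlb := EY_lb hind hg N L0 t0.
have qt := q_lb (t:=t) ltac:(by apply/andP; split).
have qs := q_ub s0.
have qs0 := q_ge0 s0.
have qt0 := q_ge0 t0.
set e := fine ('E_P[Y xi N L])%E.
have [Elb Eub] : expR (- (L * t)) * q t ^+ N <= e /\ e <= q s ^+ N + expR (- (L * s)).
  rewrite /e; move: hlb hub; case: ('E_P[Y xi N L])%E => [r| |] //=.
have kt0 : 0 <= kap * t by rewrite mulr_ge0 // ltW // kap_gt0.
have Lt : L * t = n by rewrite Lnx /t mulrK // unitfE; lra.
have lb0 : 0 < expR (- n) * (kap * t) ^+ N.
  by rewrite mulr_gt0 ?expR_gt0 // exprn_gt0 // mulr_gt0 ?kap_gt0 // /t invr_gt0.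
have Elb' : expR (- n) * (kap * t) ^+ N <= e.
  apply: le_trans Elb; rewrite Lt ler_wpM2l ?expR_ge0 //.
  by apply: lerXn2r; rewrite ?nnegrE.
have e0 : 0 < e := lt_le_trans lb0 Elb'.
pose z := expR (n * (- ((1 + a) / 2))).
have sN : s ^+ N = z by rewrite /z /n expRM_natl.
have Ls : n * ((1 + a) / 2) <= L * s.
  rewrite Lnx xa -mulrA -expRD; apply: ler_wpM2l; first lra.
  have := expR_ge1Dx (a - (1 + a) / 2); lra.
have Eub' : e <= 2 * z.
  apply: (le_trans Eub).
  have h1 : q s ^+ N <= z by rewrite -sN; apply: lerXn2r; rewrite ?nnegrE.
  have h2 : expR (- (L * s)) <= z by rewrite /z ler_expR; lra.
  lra.
have z0 : 0 < z := expR_gt0 _.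
split.
- have : ln e <= ln 2 + n * (- ((1 + a) / 2)).
    rewrite -[n * _]expRK -/z -lnM ?posrE //.
    by rewrite ler_ln ?posrE //; lra.
  have : 0 <= (n - 1) * a by rewrite mulr_ge0 //; lra.
  nra.
- have tp : 0 < t by rewrite /t invr_gt0.
  have kp := @kap_gt0 R.
  have ktp : 0 < kap * t by rewrite mulr_gt0.
  have ktN : 0 < (kap * t) ^+ N by rewrite exprn_gt0.
  have : ln (expR (- n) * (kap * t) ^+ N) <= ln e by rewrite ler_ln ?posrE.
  rewrite lnM ?posrE ?expR_gt0 ?ktN // expRK lnXn // lnM ?posrE ?kp ?tp //.
  rewrite /t lnV ?posrE // -/a -[(_ - a) *+ N]mulr_natr -/n.
  have := ler_norm (- ln (@kap R)); rewrite normrN.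
  have := normr_ge0 (ln (@kap R)).
  move: (`|ln kap|) => K; move: (ln kap) => lk => K0 hK.
  have h1 : 0 <= n * (K + lk) by rewrite mulr_ge0 //; lra.
  have h2 : 0 <= n * (1 + K) * (a - 2^-1) by rewrite !mulr_ge0 //; lra.
  nra.
Qed.
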